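(* Let $f\in\mathbb{R}[X_1,\dots,X_n]$ be a non-constant polynomial of degree $2d$ and let $r\in\mathbb{R}$. Suppose there exist nonnegative real numbers $a_{\alpha,i}$, $\alpha\in\Delta$, $i=1,\dots,n$, with $a_{\alpha,i}=0$ if and only if $\alpha_i=0$, such that, writing $a_\alpha=(a_{\alpha,1},\dots,a_{\alpha,n})$, (1) $(2d)^{2d}a_{\alpha}^{\alpha}=|f_{\alpha}|^{2d}\alpha^{\alpha}$ for each $\alpha\in\Delta$ with $|\alpha|=2d$; (2) $f_{2d,i}\ge\sum_{\alpha\in\Delta}a_{\alpha,i}$ for $i=1,\dots,n$; and (3) $f_0-r\ge\sum_{\alpha\in\Delta^{<2d}}(2d-|\alpha|)\left[\frac{|f_{\alpha}|^{2d}\alpha^{\alpha}}{(2d)^{2d}a_{\alpha}^{\alpha}}\right]^{\frac{1}{2d-|\alpha|}}$, where $\Delta^{<2d}:=\{\alpha\in\Delta:|\alpha|<2d\}$. Then $f-r$ is SOBS.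
   Context: $\mathbb{N}=\{0,1,2,\dots\}$. For $\alpha\in\mathbb{N}^n$ write $\underline{X}^\alpha=X_1^{\alpha_1}\cdots X_n^{\alpha_n}$, $|\alpha|=\sum_i\alpha_i$, and for $a\in\mathbb{R}^n$, $a^\alpha=\prod_i a_i^{\alpha_i}$ with $0^0=1$ (so $\alpha^\alpha=\prod_i\alpha_i^{\alpha_i}$). For $f=\sum_\alpha f_\alpha\underline{X}^\alpha$ of degree $2d$: $f_0$ is the constant term, $f_{2d,i}$ is the coefficient of $X_i^{2d}$, $\Omega=\{\alpha: f_\alpha\ne0\}\setminus\{\underline{0},2d\epsilon_1,\dots,2d\epsilon_n\}$ ($\epsilon_i$ the standard unit vectors), and $\Delta=\{\alpha\in\Omega:\ f_\alpha<0\text{ or }\alpha_i\text{ odd for some }i\}$. SOBS means a finite sum of squares of polynomials of the form $a\underline{X}^\alpha-b\underline{X}^\beta$, $a,b\in\mathbb{R}$. *)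

(* Defs.v *)
From HB Require Import structures.
From Stdlib Require Import Reals.
From mathcomp Require Import all_boot all_order all_algebra.
From mathcomp Require Import Rstruct.
From mathcomp Require Import mpoly.
Set Implicit Arguments. Unset Strict Implicit. Unset Printing Implicit Defensive.
Import Order.TTheory GRing.Theory Num.Theory.
Local Open Scope ring_scope.

(* a^alpha = prod_i a_i^alpha_i, with 0^0 = 1 (x ^+ 0 = 1) *)
Definition mpow (n : nat) (a : 'I_n -> R) (alpha : 'X_{1..n}) : R :=
  \prod_(i < n) (a i) ^+ (alpha i).

Definition mself (n : nat) (alpha : 'X_{1..n}) : R :=
  \prod_(i < n) ((alpha i)%:R) ^+ (alpha i).

Definition mpure (n : nat) (k : nat) (i : 'I_n) : 'X_{1..n} := (U_(i) *+ k)%MM.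

Definition inOmega (n d : nat) (f : {mpoly R[n]}) (alpha : 'X_{1..n}) : bool :=
  [&& f@_alpha != 0, alpha != 0%MM & [forall i : 'I_n, alpha != mpure (2 * d) i]].

Definition inDelta (n d : nat) (f : {mpoly R[n]}) (alpha : 'X_{1..n}) : bool :=
  inOmega d f alpha && ((f@_alpha < 0) || [exists i : 'I_n, odd (alpha i)]).

Definition SOBS (n : nat) (p : {mpoly R[n]}) : Prop :=
  exists s : seq (R * 'X_{1..n} * R * 'X_{1..n}),
    p = \sum_(t <- s) (t.1.1.1 *: 'X_[t.1.1.2] - t.1.2 *: 'X_[t.2]) ^+ 2.

(* Main.v *)
Require Import Defs.
From HB Require Import structures.
From Stdlib Require Import Reals.
From mathcomp Require Import all_boot all_order all_algebra.
From mathcomp Require Import Rstruct.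
From mathcomp Require Import mpoly.
From mathcomp Require Import ring lra.
Import Order.TTheory GRing.Theory Num.Theory.
Local Open Scope ring_scope.
Set Implicit Arguments. Unset Strict Implicit.



Section S.
Variable n : nat.
Implicit Types (p q u v : {mpoly R[n]}).

Definition ismon u := exists (c : R) (m : 'X_{1..n}), u = c *: 'X_[m].

Lemma SOBS0 : SOBS (0 : {mpoly R[n]}).
Proof. by exists [::]; rewrite big_nil. Qed.

Lemma SOBSD p q : SOBS p -> SOBS q -> SOBS (p + q).
Proof. by move=> [s1 ->] [s2 ->]; exists (s1 ++ s2); rewrite big_cat. Qed.

Lemma SOBS_sum (I : Type) (r : seq I) (P : pred I) (F : I -> {mpoly R[n]}) :
  (forall i, P i -> SOBS (F i)) -> SOBS (\sum_(i <- r | P i) F i).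
Proof. move=> H; apply: (big_ind (@SOBS n)) => //; [exact: SOBS0|exact: SOBSD]. Qed.

Lemma SOBSZ (c : R) p : 0 <= c -> SOBS p -> SOBS (c *: p).
Proof.
move=> c0 [s ->]; exists [seq (Num.sqrt c * t.1.1.1, t.1.1.2, Num.sqrt c * t.1.2, t.2) | t <- s].
rewrite big_map scaler_sumr; apply: eq_bigr => t _ /=.
rewrite -!scalerA -scalerBr exprZn -[Num.sqrt c ^+ 2]/(Num.sqrt c * Num.sqrt c).
by rewrite -expr2 sqr_sqrtr.
Qed.

Lemma SOBS_nat (k : nat) p : SOBS p -> SOBS (k%:R * p).
Proof.
move=> H; rewrite mulr_natl -scaler_nat; apply: SOBSZ => //; exact: ler0n.
Qed.

Lemma ismonX (m : 'X_{1..n}) : ismon 'X_[m].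
Proof. by exists 1, m; rewrite scale1r. Qed.

Lemma ismonC (c : R) : ismon c%:MP.
Proof. by exists c, 0%MM; rewrite mpolyX0 -alg_mpolyC. Qed.

Lemma ismonM u v : ismon u -> ismon v -> ismon (u * v).
Proof.
move=> [c [m ->]] [c' [m' ->]]; exists (c * c'), (m + m')%MM.
by rewrite -scalerAl -scalerAr scalerA mpolyXD.
Qed.

Lemma ismon1 : ismon (1 : {mpoly R[n]}).
Proof. by rewrite -mpolyC1; apply: ismonC. Qed.

Lemma ismonX_ u k : ismon u -> ismon (u ^+ k).
Proof.
move=> H; elim: k => [|k IH]; first by rewrite expr0; exact: ismon1.
by rewrite exprS; apply: ismonM.
Qed.

Lemma ismon_prod (I : Type) (r : seq I) (P : pred I) (F : I -> {mpoly R[n]}) :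
  (forall i, P i -> ismon (F i)) -> ismon (\prod_(i <- r | P i) F i).
Proof. move=> H; apply: (big_ind (@ismon)) => //; [exact: ismon1|exact: ismonM]. Qed.

Lemma ismon_prod_seq (I : eqType) (r : seq I) (F : I -> {mpoly R[n]}) :
  (forall i, i \in r -> ismon (F i)) -> ismon (\prod_(i <- r) F i).
Proof.
elim: r => [|i r IH] H; first by rewrite big_nil; exact: ismon1.
rewrite big_cons; apply: ismonM; first by apply: H; rewrite inE eqxx.
by apply: IH => j hj; apply: H; rewrite inE hj orbT.
Qed.

Lemma SOBS_bin u v : ismon u -> ismon v -> SOBS ((u - v) ^+ 2).
Proof.
move=> [c [m ->]] [c' [m' ->]]; exists [:: (c, m, c', m')].
by rewrite big_cons big_nil addr0.
Qed.

Lemma SOBS_monM u p : ismon u -> SOBS p -> SOBS (u ^+ 2 * p).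
Proof.
move=> [c [m ->]] [s ->]; exists [seq (c * t.1.1.1, (m + t.1.1.2)%MM, c * t.1.2, (m + t.2)%MM) | t <- s].
rewrite big_map mulr_sumr; apply: eq_bigr => t _ /=.
rewrite -exprMn; congr (_ ^+ 2).
rewrite mulrBr !mpolyXD -!scalerA -!scalerAl -!scalerAr.
by [].
Qed.

End S.



Section S2.
Variable n : nat.
Implicit Types (p q u v : {mpoly R[n]}).

Lemma SOBS_M u v k : ismon u -> ismon v ->
  SOBS ((u ^+ 2 - v ^+ 2) * ((u ^+ 2) ^+ k - (v ^+ 2) ^+ k)).
Proof.
move=> hu hv; elim: k => [|k IH]; first by rewrite !expr0 subrr mulr0; exact: SOBS0.
set z := u ^+ 2; set w := v ^+ 2.
have -> : (z - w) * (z ^+ k.+1 - w ^+ k.+1) =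
   z * ((z - w) * (z ^+ k - w ^+ k)) + (v ^+ k) ^+ 2 * (z - w) ^+ 2.
  by rewrite -exprM mulnC exprM -/w !exprS; ring.
apply: SOBSD; first exact: SOBS_monM.
apply: SOBS_monM; first exact: ismonX_.
by apply: SOBS_bin; apply: ismonX_.
Qed.

Lemma SOBS_T u v t k : ismon u -> ismon v ->
  SOBS (t%:R * (u ^+ 2) ^+ (t + k) * (u ^+ 2 - v ^+ 2)
        + (v ^+ 2) ^+ k.+1 * ((v ^+ 2) ^+ t - (u ^+ 2) ^+ t)).
Proof.
move=> hu hv; elim: t => [|t IH].
  by rewrite !expr0 subrr !mulr0 mulr0n !mul0r add0r; exact: SOBS0.
set z := u ^+ 2; set w := v ^+ 2.
have -> : t.+1%:R * z ^+ (t.+1 + k) * (z - w) + w ^+ k.+1 * (w ^+ t.+1 - z ^+ t.+1)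
  = z * (t%:R * z ^+ (t + k) * (z - w) + w ^+ k.+1 * (w ^+ t - z ^+ t))
    + (z - w) * (z ^+ (t + k).+1 - w ^+ (t + k).+1).
  rewrite addSn !exprS !exprD mulrS; ring.
apply: SOBSD; first exact: SOBS_monM.
exact: SOBS_M.
Qed.

Lemma SOBS_P u v t k : ismon u -> ismon v ->
  SOBS (t%:R * (u ^+ 2) ^+ (t + k) + k%:R * (v ^+ 2) ^+ (t + k)
        - (t + k)%:R * ((u ^+ 2) ^+ t * (v ^+ 2) ^+ k)).
Proof.
move=> hu hv; elim: k => [|k IH].
  by rewrite addn0 expr0 mulr1 mul0r addr0 subrr; exact: SOBS0.
set z := u ^+ 2; set w := v ^+ 2.
have -> : t%:R * z ^+ (t + k.+1) + k.+1%:R * w ^+ (t + k.+1) - (t + k.+1)%:R * (z ^+ t * w ^+ k.+1)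
  = w * (t%:R * z ^+ (t + k) + k%:R * w ^+ (t + k) - (t + k)%:R * (z ^+ t * w ^+ k))
    + (t%:R * z ^+ (t + k) * (z - w) + w ^+ k.+1 * (w ^+ t - z ^+ t)).
  rewrite addnS !exprS !exprD !mulrS natrD; ring.
apply: SOBSD; first exact: SOBS_monM.
exact: SOBS_T.
Qed.

End S2.



Section S3.
Variable n : nat.
Implicit Types (p q u v : {mpoly R[n]}).

Lemma SOBS_unscale (k : nat) p : (0 < k)%N -> SOBS (k%:R * p) -> SOBS p.
Proof.
move=> k0 H; have -> : p = (k%:R : R)^-1 *: (k%:R * p).
  rewrite mulr_natl -scaler_nat scalerA mulVf ?scale1r //.
  by rewrite pnatr_eq0 -lt0n.
apply: SOBSZ => //; rewrite invr_ge0; exact: ler0n.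
Qed.

Definition Ex (D : nat) (s : seq ({mpoly R[n]} * nat)) :=
  \sum_(x <- s) x.2%:R * x.1 ^+ (2 * D) - D%:R * \prod_(x <- s) x.1 ^+ (2 * x.2).

Lemma Ex_spec N : forall (s : seq ({mpoly R[n]} * nat)) D, (size s <= N)%N ->
  sumn (map snd s) = D -> (forall x, x \in s -> ismon x.1) -> SOBS (Ex D s).
Proof.
elim: N => [|N IH] s D.
  rewrite leqn0 => /nilP -> /= <- _.
  by rewrite /Ex !big_nil mul0r subrr; exact: SOBS0.
case: s => [|[y b] [|[y' b'] s']] /=.
- move=> _ <- _; rewrite /Ex !big_nil mul0r subrr; exact: SOBS0.
- move=> _; rewrite addn0 => <- _.
  by rewrite /Ex !big_cons !big_nil addr0 mulr1 subrr; exact: SOBS0.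
move=> hsz hD hm.
have hy : ismon y by apply: (hm (y, b)); rewrite inE eqxx.
have hy' : ismon y' by apply: (hm (y', b')); rewrite !inE eqxx orbT.
have hs' : forall x, x \in s' -> ismon x.1.
  by move=> x hx; apply: hm; rewrite !inE hx !orbT.
case: (posnP (b + b')) => hL.
  move: hL => /eqP; rewrite addn_eq0 => /andP[/eqP hb /eqP hb']; subst b b'.
  have -> : Ex D [:: (y, 0%N), (y', 0%N) & s'] = Ex D s'.
    by rewrite /Ex !big_cons /= !muln0 !expr0 !mul1r !mul0r !add0r.
  apply: IH hs'; [exact: ltnW | by rewrite -hD].
set L := (b + b')%N.
have IH1 : SOBS (Ex D ((y, L) :: s')).
  apply: IH; [exact: hsz | by rewrite /= -hD addnA |].
  move=> x; rewrite inE => /orP[/eqP -> /= //|]; last exact: hs'.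
have IH2 : SOBS (Ex D ((y', L) :: s')).
  apply: IH; [exact: hsz | by rewrite /= -hD addnA |].
  move=> x; rewrite inE => /orP[/eqP -> /= //|]; last exact: hs'.
have hQ : ismon (\prod_(x <- s') x.1 ^+ x.2).
  by apply: ismon_prod_seq => x hx; apply: ismonX_; apply: hs'.
have HP := SOBS_P b b' hy hy'.
apply: (SOBS_unscale hL).
have -> : L%:R * Ex D [:: (y, b), (y', b') & s'] =
   b%:R * Ex D ((y, L) :: s') + b'%:R * Ex D ((y', L) :: s')
   + D%:R * ((\prod_(x <- s') x.1 ^+ x.2) ^+ 2 *
      (b%:R * (y ^+ 2) ^+ (b + b') + b'%:R * (y' ^+ 2) ^+ (b + b')
        - (b + b')%:R * ((y ^+ 2) ^+ b * (y' ^+ 2) ^+ b'))).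
  have hB : \prod_(x <- s') x.1 ^+ (2 * x.2) = (\prod_(x <- s') x.1 ^+ x.2) ^+ 2.
    by rewrite -prodrXl; apply: eq_bigr => x _; rewrite -exprM mulnC.
  rewrite /Ex !big_cons /= hB.
  rewrite !exprM /L natrD.
  set A := \sum_(x <- s') _; set B := \prod_(x <- s') _.
  ring.
apply: SOBSD; first by apply: SOBSD; apply: SOBS_nat.
by apply: SOBS_nat; apply: SOBS_monM.
Qed.

End S3.



Section S4.
Variable n : nat.
Implicit Types (p u v : {mpoly R[n]}).

Lemma split_ex (s : seq ({mpoly R[n]} * nat)) D : (D <= sumn (map snd s))%N ->
  exists t : seq ({mpoly R[n]} * nat * nat),
    map (fun q => (q.1.1, q.1.2 + q.2)%N) t = s /\ sumn (map (fun q => q.1.2) t) = D.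
Proof.
elim: s D => [|[y b] s IH] D /=.
  by rewrite leqn0 => /eqP ->; exists [::].
move=> hD; case: (leqP b D) => hb.
  have [t [ht1 ht2]] := IH (D - b)%N ltac:(by rewrite leq_subLR).
  exists ((y, b, 0%N) :: t) => /=; rewrite ht1 ht2 addn0; split => //.
  by rewrite subnKC.
have [t [ht1 ht2]] := IH 0%N (leq0n _).
exists ((y, D, (b - D)%N) :: t) => /=; rewrite ht1 ht2 addn0 subnKC //.
exact: ltnW.
Qed.

Lemma sumn_split (t : seq ({mpoly R[n]} * nat * nat)) :
  sumn (map (fun q => (q.1.2 + q.2)%N) t) =
  (sumn (map (fun q => q.1.2) t) + sumn (map (fun q => q.2) t))%N.
Proof. by elim: t => //= q t ->; rewrite !addnA; congr (_ + _)%N; rewrite addnAC. Qed.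

Lemma H_spec (s : seq ({mpoly R[n]} * nat)) D :
  sumn (map snd s) = (2 * D)%N -> (forall x, x \in s -> ismon x.1) ->
  SOBS (\sum_(x <- s) x.2%:R * x.1 ^+ (2 * D) - (2 * D)%:R * \prod_(x <- s) x.1 ^+ x.2).
Proof.
move=> hs hm.
have [t [ht1 ht2]] := @split_ex s D ltac:(by rewrite hs leq_pmull).
have hs2 : sumn (map (fun q => q.2) t) = D.
  have := hs; rewrite -ht1 -map_comp.
  rewrite (_ : snd \o _ = fun q => (q.1.2 + q.2)%N) // sumn_split ht2 => /eqP.
  by rewrite mul2n -addnn eqn_add2l => /eqP.
have hmt : forall q, q \in t -> ismon q.1.1.
  move=> q hq; have := hm (q.1.1, (q.1.2 + q.2)%N); apply.
  by rewrite -ht1; apply/mapP; exists q.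
set s1 := map (fun q => (q.1.1, q.1.2)) t.
set s2 := map (fun q => (q.1.1, q.2)) t.
have E1 : SOBS (Ex D s1).
  apply: (@Ex_spec n (size s1)) => //.
    by rewrite /s1 -map_comp.
  by move=> x /mapP[q hq ->] /=; apply: hmt.
have E2 : SOBS (Ex D s2).
  apply: (@Ex_spec n (size s2)) => //.
    by rewrite /s2 -map_comp.
  by move=> x /mapP[q hq ->] /=; apply: hmt.
set P1 := \prod_(q <- t) q.1.1 ^+ q.1.2.
set P2 := \prod_(q <- t) q.1.1 ^+ q.2.
have hP1 : ismon P1 by apply: ismon_prod_seq => q hq; apply: ismonX_; apply: hmt.
have hP2 : ismon P2 by apply: ismon_prod_seq => q hq; apply: ismonX_; apply: hmt.
have -> : \sum_(x <- s) x.2%:R * x.1 ^+ (2 * D) - (2 * D)%:R * \prod_(x <- s) x.1 ^+ x.2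
   = Ex D s1 + Ex D s2 + D%:R * (P1 - P2) ^+ 2.
  rewrite /Ex /s1 /s2 -ht1 !big_map /=.
  have -> : \prod_(j <- t) j.1.1 ^+ (j.1.2 + j.2) = P1 * P2.
    by rewrite -big_split /=; apply: eq_bigr => q _; rewrite exprD.
  have -> : \prod_(j <- t) j.1.1 ^+ (2 * j.1.2) = P1 ^+ 2.
    by rewrite -prodrXl; apply: eq_bigr => q _; rewrite -exprM mulnC.
  have -> : \prod_(j <- t) j.1.1 ^+ (2 * j.2) = P2 ^+ 2.
    by rewrite -prodrXl; apply: eq_bigr => q _; rewrite -exprM mulnC.
  have -> : \sum_(j <- t) (j.1.2 + j.2)%:R * j.1.1 ^+ (2 * D) =
     \sum_(j <- t) j.1.2%:R * j.1.1 ^+ (2 * D) + \sum_(j <- t) j.2%:R * j.1.1 ^+ (2 * D).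
    by rewrite -big_split /=; apply: eq_bigr => q _; rewrite natrD mulrDl.
  rewrite natrM; set A := \sum_(j <- t) _; set B := \sum_(j <- t) _.
  ring.
apply: SOBSD; first exact: SOBSD.
by apply: SOBS_nat; apply: SOBS_bin.
Qed.

End S4.



Section S5.
Variable n : nat.
Implicit Types (p u v : {mpoly R[n]}).

Lemma natMP (k : nat) p : k%:R * p = (k%:R : R) *: p.
Proof. by rewrite mulr_natl -scaler_nat. Qed.

Lemma hurwitz_app (d : nat) (al : 'X_{1..n}) (K : nat) (s : 'I_n -> R) (t : R) :
  (mdeg al + K = 2 * d)%N ->
  SOBS (\sum_(i < n) ((al i)%:R * s i ^+ (2 * d)) *: 'X_[mpure (2 * d) i]
        + (K%:R * t ^+ (2 * d))%:MP
        - ((2 * d)%:R * (\prod_(i < n) s i ^+ al i) * t ^+ K) *: 'X_[al]).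
Proof.
move=> hdeg.
set s0 := [seq (s i *: 'X_[U_(i)%MM], al i) | i <- index_enum 'I_n] ++ [:: (t%:MP, K)].
have H := @H_spec n s0 d.
have hsum : sumn (map snd s0) = (2 * d)%N.
  rewrite map_cat sumn_cat /= addn0 -map_comp sumnE big_map -hdeg mdegE.
  by [].
have hm : forall x, x \in s0 -> ismon x.1.
  move=> x; rewrite mem_cat => /orP[/mapP[i _ ->]|]; first by exists (s i), U_(i)%MM.
  by rewrite inE => /eqP -> /=; apply: ismonC.
have {H} := H hsum hm.
congr SOBS.
rewrite /s0 !big_cat !big_map !big_cons !big_nil /= addr0 mulr1.
congr (_ + _ + - _).
    apply: eq_bigr => i _; rewrite natMP exprZn mpolyXn scalerA.
    by [].
  by rewrite -rmorphXn -mpolyC_nat -mpolyCM.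
rewrite (eq_bigr (fun i => s i ^+ al i *: 'X_[(U_(i) *+ al i)%MM])); last first.
  by move=> i _; rewrite exprZn mpolyXn.
rewrite scaler_prod -(big_morph (fun m : 'X_{1..n} => ('X_[m] : {mpoly R[n]})) (@mpolyXD _ _) (@mpolyX0 _ _)).
rewrite -multinomUE_id -rmorphXn.
rewrite natMP -scalerAl mulrC mul_mpolyC !scalerA.
by rewrite mulrC mulrA.
Qed.

End S5.



Lemma Rpow_gt0 x y : 0 < Rpower x y.
Proof. by apply/RltP; exact: exp_pos. Qed.

Lemma Rroot (y : R) (N : nat) : 0 < y -> (0 < N)%N -> Rpower y (/ INR N) ^+ N = y.
Proof.
move=> /RltP y0 N0.
rewrite -RpowE -Rpower_pow; last exact/RltP/Rpow_gt0.
rewrite Rpower_mult Rinv_l ?Rpower_1 //.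
by apply: not_0_INR => hN; rewrite hN in N0.
Qed.



Lemma sign_ex n (al : 'X_{1..n}) (fa : R) : fa != 0 ->
  (fa < 0 \/ exists i, odd (al i)) ->
  exists e : 'I_n -> R, (forall i, e i ^+ 2 = 1) /\ (\prod_(i < n) e i ^+ al i) * `|fa| = - fa.
Proof.
move=> hfa; case: (ltrP fa 0) => hf.
  move=> _; exists (fun=> 1); split=> [i|]; first by rewrite expr1n.
  by rewrite big1 ?mul1r ?ltr0_norm // => i _; rewrite expr1n.
case=> [//|[i0 hi0]].
exists (fun i => if i == i0 then -1 else 1); split=> [i|].
  by case: (i == i0); rewrite ?sqrrN expr1n.
rewrite (bigD1 i0) //= eqxx big1 ?mulr1; last first.
  by move=> i /negbTE ->; rewrite expr1n.
by rewrite -signr_odd hi0 expr1 ger0_norm // mulN1r.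
Qed.

Lemma G_sobs n (d : nat) (al : 'X_{1..n}) (a : 'I_n -> R) (fa : R) :
  (0 < d)%N -> (mdeg al <= 2 * d)%N -> fa != 0 ->
  (forall i, 0 <= a i) -> (forall i, a i = 0 <-> al i = 0%N) ->
  (fa < 0 \/ exists i, odd (al i)) ->
  (mdeg al = (2 * d)%N -> ((2 * d)%:R) ^+ (2 * d) * mpow a al = `|fa| ^+ (2 * d) * mself al) ->
  SOBS (\sum_(i < n) a i *: 'X_[mpure (2 * d) i]
        + ((2 * d - mdeg al)%:R * Rpower (`|fa| ^+ (2 * d) * mself al
              / (((2 * d)%:R) ^+ (2 * d) * mpow a al)) (/ INR (2 * d - mdeg al)))%:MP
        + fa *: 'X_[al]).
Proof.
move=> hd hdeg hfa ha0 haz hsgn h1.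
have N0 : (0 < 2 * d)%N by rewrite muln_gt0.
have hapos : forall i, (0 < al i)%N -> 0 < a i.
  move=> i hi; rewrite lt_def ha0 andbT; apply/eqP => /haz h.
  by rewrite h in hi.
have hmpow : 0 < mpow a al.
  rewrite /mpow; apply: prodr_gt0 => i _.
  case: (posnP (al i)) => [->|hp]; first by rewrite expr0.
  by apply: exprn_gt0; apply: hapos.
have hmself : 0 < mself al.
  rewrite /mself; apply: prodr_gt0 => i _.
  case: (posnP (al i)) => [->|hp]; first by rewrite expr0.
  by apply: exprn_gt0; rewrite ltr0n.
set N := (2 * d)%N in N0 h1 *.
set K := (N - mdeg al)%N.
set x := `|fa| ^+ N * mself al / (N%:R ^+ N * mpow a al).
have hx : 0 < x.
  apply: divr_gt0; apply: mulr_gt0 => //; apply: exprn_gt0; last by rewrite ltr0n.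
  by rewrite normr_gt0.
set r := fun i => Rpower (a i / (al i)%:R) (/ INR N).
set t := Rpower (Rpower x (/ INR K)) (/ INR N).
have hr : forall i, (al i)%:R * r i ^+ N = a i.
  move=> i; case: (posnP (al i)) => hp.
    by rewrite hp mul0r; apply/esym/haz.
  rewrite /r Rroot //; last by apply: divr_gt0; [apply: hapos | rewrite ltr0n].
  by rewrite mulrC divfK // pnatr_eq0 -lt0n.
have hrp : forall i, (r i ^+ N) ^+ al i = (a i / (al i)%:R) ^+ al i.
  move=> i; case: (posnP (al i)) => hp; first by rewrite hp !expr0.
  rewrite /r Rroot //; by apply: divr_gt0; [apply: hapos | rewrite ltr0n].
have [e [he1 he2]] := sign_ex hfa hsgn.
set M := (\prod_(i < n) r i ^+ al i) * t ^+ K.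
have hM0 : 0 <= M.
  apply: mulr_ge0; last by apply: exprn_ge0; apply: ltW; apply: Rpow_gt0.
  by apply: prodr_ge0 => i _; apply: exprn_ge0; apply: ltW; apply: Rpow_gt0.
have hMN : M ^+ N = (`|fa| / N%:R) ^+ N.
  rewrite /M exprMn -prodrXl.
  rewrite (eq_bigr (fun i => a i ^+ al i / (al i)%:R ^+ al i)); last first.
    by move=> i _; rewrite -exprM mulnC exprM hrp expr_div_n.
  rewrite prodf_div.
  rewrite -exprM mulnC exprM /t Rroot //; last exact: Rpow_gt0.
  rewrite expr_div_n.
  have hmp : mpow a al != 0 by rewrite gt_eqF.
  have hms : mself al != 0 by rewrite gt_eqF.
  have hNp : (N%:R : R) ^+ N != 0 by apply: expf_neq0; rewrite pnatr_eq0 -lt0n.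
  rewrite -/(mpow a al) -/(mself al).
  case: (posnP K) => hK.
    have hdeg2 : mdeg al = N by apply/eqP; rewrite eqn_leq hdeg -subn_eq0 -/K hK.
    rewrite hK expr0 mulr1.
    have := h1 hdeg2 => h1'.
    apply: (@mulfI _ (N%:R ^+ N * mself al)); first by rewrite mulf_neq0.
    rewrite mulrA -[N%:R ^+ N * mself al * mpow a al]mulrA [mself al * _]mulrC mulrA h1'.
    by field; rewrite hms hNp.
  rewrite Rroot // /x.
  by field; rewrite hms hNp hmp.
have hM : M = `|fa| / N%:R.
  apply: (pexpIrn N0) => //; rewrite ?inE //.
  by apply: divr_ge0 => //; rewrite ler0n.
have hdegK : (mdeg al + K = 2 * d)%N by rewrite /K subnKC.
have := hurwitz_app (fun i => e i * r i) t hdegK.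
congr SOBS.
congr (_ + _ + _).
  apply: eq_bigr => i _; rewrite exprMn -/N /N exprM he1 expr1n mul1r -/N.
  by rewrite hr.
  congr (_ %:MP); congr (_ * _); rewrite /t Rroot //; exact: Rpow_gt0.
rewrite -scaleNr; congr (_ *: _).
have -> : \prod_(i < n) (e i * r i) ^+ al i = (\prod_(i < n) e i ^+ al i) * \prod_(i < n) r i ^+ al i.
  by rewrite -big_split /=; apply: eq_bigr => i _; rewrite exprMn.
set E := \prod_(i < n) e i ^+ al i.
have hN : (N%:R : R) != 0 by rewrite pnatr_eq0 -lt0n.
rewrite (_ : (2 * d)%:R * (E * \prod_(i < n) r i ^+ al i) * t ^+ K = E * `|fa|).
  by rewrite he2 opprK.
rewrite (_ : (2 * d)%:R * (E * \prod_(i < n) r i ^+ al i) * t ^+ K = N%:R * E * M).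
  by rewrite hM; field.
by rewrite /M /N; ring.
Qed.



Lemma SOBS_even n (p : {mpoly R[n]}) :
  (forall m, p@_m != 0 -> 0 <= p@_m /\ forall i, ~~ odd (m i)) -> SOBS p.
Proof.
move=> H; rewrite (mpolyE p) big_seq; apply: SOBS_sum => m.
rewrite mcoeff_msupp => /H [hp hev].
set h := [multinom (m i)./2 | i < n].
exists [:: (Num.sqrt p@_m, h, 0, 0%MM)]; rewrite big_cons big_nil addr0 /=.
rewrite scale0r subr0 exprZn sqr_sqrtr // mpolyXn; congr (_ *: 'X_[_]).
apply/mnmP => i; rewrite mulmnE mnmE muln2.
by rewrite -{1}(odd_double_half (m i)) (negbTE (hev i)) add0n.
Qed.

Lemma mpureE n k (i j : 'I_n) : mpure k i j = ((i == j) * k)%N.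
Proof. by rewrite /mpure mulmnE mnm1E. Qed.

Lemma mpure_inj n k (i j : 'I_n) : (0 < k)%N -> (mpure k i == mpure k j) = (i == j).
Proof.
move=> k0; apply/eqP/eqP => [h|-> //].
move/mnmP: h => /(_ j); rewrite !mpureE eqxx mul1n.
by case: (i =P j) => // _; rewrite mul0n => h; move: k0; rewrite -h.
Qed.

Lemma mpure_neq0 n k (i : 'I_n) : (0 < k)%N -> mpure k i != 0%MM.
Proof.
move=> k0; apply/eqP => /mnmP/(_ i); rewrite mpureE eqxx mul1n mnm0E => h.
by move: k0; rewrite h.
Qed.

Theorem theorem3p1 (n d : nat) (f : {mpoly R[n]}) (r : R)
  (hd : (0 < d)%N) (hdeg : msize f = (2 * d).+1)
  (a : 'X_{1..n} -> 'I_n -> R)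
  (ha_nonneg : forall alpha i, inDelta d f alpha -> 0 <= a alpha i)
  (ha_zero : forall alpha i, inDelta d f alpha -> (a alpha i = 0 <-> alpha i = 0%N))
  (h1 : forall alpha, inDelta d f alpha -> mdeg alpha = (2 * d)%N ->
          ((2 * d)%:R) ^+ (2 * d) * mpow (a alpha) alpha
          = `|f@_alpha| ^+ (2 * d) * mself alpha)
  (h2 : forall i : 'I_n,
          \sum_(alpha <- msupp f | inDelta d f alpha) a alpha i
          <= f@_(mpure (2 * d) i))
  (h3 : \sum_(alpha <- msupp f | inDelta d f alpha && (mdeg alpha < 2 * d)%N)
          ((2 * d - mdeg alpha)%:R
           * Rpower (`|f@_alpha| ^+ (2 * d) * mself alpha
                     / (((2 * d)%:R) ^+ (2 * d) * mpow (a alpha) alpha))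
                    (/ INR (2 * d - mdeg alpha)))
        <= f@_0%MM - r) :
  SOBS (f - r%:MP).
Proof.
pose c := fun alpha => ((2 * d - mdeg alpha)%:R
           * Rpower (`|f@_alpha| ^+ (2 * d) * mself alpha
                     / (((2 * d)%:R) ^+ (2 * d) * mpow (a alpha) alpha))
                    (/ INR (2 * d - mdeg alpha))) : R.
pose G := fun alpha => \sum_(i < n) a alpha i *: 'X_[mpure (2 * d) i]
        + (c alpha)%:MP + f@_alpha *: 'X_[alpha].
pose SG := \sum_(alpha <- msupp f | inDelta d f alpha) G alpha.
have N0 : (0 < 2 * d)%N by rewrite muln_gt0.
have hDel : forall alpha, inDelta d f alpha ->
   [/\ f@_alpha != 0, alpha != 0%MM & forall i, alpha != mpure (2 * d) i].
  move=> alpha /andP[/and3P[h01 h02 /forallP h03] _]; split => //.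
have -> : f - r%:MP = SG + (f - r%:MP - SG) by rewrite [RHS]addrC subrK.
apply: SOBSD.
  rewrite /SG big_seq_cond; apply: SOBS_sum => alpha /andP[hin hD].
  apply: G_sobs => //.
  - by have := msize_mdeg_lt hin; rewrite hdeg ltnS.
  - by rewrite -mcoeff_msupp.
  - by move=> i; apply: ha_nonneg.
  - by move=> i; apply: ha_zero.
  - move: hD; rewrite /inDelta => /andP[_ /orP[h|/existsP[i hi]]]; first by left.
    by right; exists i.
  - by move=> hm; apply: h1.
apply: SOBS_even => m hm.
pose S1 := \sum_(alpha <- msupp f | inDelta d f alpha)
              \sum_(i < n) a alpha i * (mpure (2 * d) i == m)%:R.
pose S2 := \sum_(alpha <- msupp f | inDelta d f alpha) c alpha.
pose S3 := \sum_(alpha <- msupp f | inDelta d f alpha) f@_alpha * (alpha == m)%:R.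
have coefR : (f - r%:MP - SG)@_m = f@_m - r * (m == 0%MM)%:R - (S1 + S2 * (m == 0%MM)%:R + S3).
  rewrite !mcoeffB mcoeffC /SG raddf_sum /S1 /S2 /S3 mulr_suml -!big_split /=.
  congr (_ - _); apply: eq_bigr => alpha _.
  rewrite /G !mcoeffD raddf_sum mcoeffC [(f@_alpha *: _)@__]mcoeffZ mcoeffX; congr (_ + _ + _).
  by apply: eq_bigr => i _; rewrite /= mcoeffZ mcoeffX.
have hS3 : ~~ inDelta d f m -> S3 = 0.
  move=> hDm; apply: big1 => alpha hD; case: eqP => [ha|]; last by rewrite mulr0.
  by move: hDm; rewrite -ha hD.
have hS1 : (forall i, mpure (2 * d) i != m) -> S1 = 0.
  move=> hp; apply: big1 => alpha _; apply: big1 => i _.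
  by rewrite (negbTE (hp i)) mulr0.
rewrite coefR in hm *.
case: (eqVneq m 0%MM) => [hm0 | hm0].
  rewrite hS3 ?hS1 ?hm0 ?eqxx ?mulr1 ?addr0 ?add0r.
  - split; last by move=> i; rewrite mnm0E.
    rewrite subr_ge0.
    apply: le_trans h3; rewrite /S2 [X in _ <= X]big_mkcondr /=.
    apply: ler_sum => alpha _; case: ltnP => hlt //.
    rewrite /c (_ : (2 * d - mdeg alpha)%N = 0%N); last first.
      by apply/eqP; rewrite subn_eq0.
    by rewrite RmultE ?mulr0n mul0r.
  - by move=> i; rewrite mpure_neq0.
  - by apply/negP => /hDel[_ h _]; rewrite eqxx in h.
move: hm; rewrite ?(negbTE hm0) /= mulr0n !mulr0 subr0 addr0 => hm.
case: (boolP [exists i, m == mpure (2 * d) i]) => [/existsP[j /eqP hj] | hnp].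
  rewrite hS3; last by apply/negP => /hDel[_ _ /(_ j)]; rewrite hj eqxx.
  rewrite addr0; split; last first.
    by move=> i; rewrite hj mpureE oddM oddM /= andbF.
  rewrite subr_ge0 hj; apply: le_trans (h2 j); apply: ler_sum => alpha _.
  rewrite (bigD1 j) //= hj eqxx mulr1 big1 ?addr0 // => i hij.
  by rewrite mpure_inj // (negbTE hij) mulr0.
have hnp' : forall i, mpure (2 * d) i != m.
  by move=> i; apply/negP => /eqP hi; move/existsP: hnp; apply; exists i; rewrite hi.
rewrite hS1 // add0r in hm *.
case: (boolP (inDelta d f m)) => hDm.
  have hin : m \in msupp f by rewrite mcoeff_msupp; case: (hDel m hDm).
  have : S3 = f@_m.
    rewrite /S3 big_mkcond (bigD1_seq m) ?msupp_uniq //= hDm eqxx mulr1 big1 ?addr0 //.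
    by move=> alpha /negbTE ->; case: ifP => _; rewrite ?mulr0.
  by move=> h; rewrite h subrr eqxx in hm.
rewrite hS3 // subr0 in hm *.
have hOm : inOmega d f m.
  apply/and3P; split => //; apply/forallP => i; rewrite eq_sym; exact: hnp'.
move: hDm; rewrite /inDelta hOm /= negb_or => /andP[hneg /existsPn hev].
by split; [rewrite leNgt | exact: hev].
Qed.
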